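(* Let $t\ge 2$ and let $(Q,B)$ be a Steiner system $S(t,k,m)$. Then its incidence matrix is $\lceil k/(t-1)\rceil$-decodable. Moreover, for every integer $n\ge 1$, $$m^*(n,3,3)\le \left\lceil\frac{1+\sqrt{1+24n}}{2}\right\rceil+3.$$
   Context: A Steiner system $S(t,k,m)$ is a pair $(Q,B)$ where $Q$ is a set of $m$ points and $B$ is a collection of $k$-subsets (blocks) of $Q$ such that every $t$-subset of $Q$ is contained in exactly one block. Its incidence matrix is the $|Q|\times|B|$ binary matrix whose $(i,j)$ entry is $1$ iff the $i$-th point lies in the $j$-th block. For a binary matrix $M$ and a nonempty set $S$ of its columns, $S$ is a stopping set if the submatrix formed by $S$ has no row with exactly one $1$; $s(M)$ is the minimum size of a stopping set ($+\infty$ if none). $M$ is $d$-decodable if $s(M)\ge d+1$, and $(d,k)$-decodable if moreover every column has exactly $k$ ones; $m^*(n,d,k)$ is the minimum $m$ such that an $m\times n$ $(d,k)$-decodable matrix exists. *)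

(* Defs.v *)
From HB Require Import structures.
From mathcomp Require Import all_boot all_order all_algebra.
From mathcomp Require Import reals.
Set Implicit Arguments. Unset Strict Implicit. Unset Printing Implicit Defensive.
Import Order.TTheory GRing.Theory Num.Theory.

Definition stopping_set (m n : nat) (M : 'M[bool]_(m, n)) (S : {set 'I_n}) : Prop :=
  S != set0 /\ forall i : 'I_m, #|[set j in S | M i j]| != 1%N.

(* M is d-decodable iff s(M) >= d+1, where s(M) is the minimum size of a
   stopping set (+oo if there is none): i.e. every stopping set has size > d. *)
Definition decodable (d m n : nat) (M : 'M[bool]_(m, n)) : Prop :=
  forall S : {set 'I_n}, stopping_set M S -> (d < #|S|)%N.

Definition dk_decodable (d k m n : nat) (M : 'M[bool]_(m, n)) : Prop :=
  decodable d M /\ forall j : 'I_n, #|[set i | M i j]| = k.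

Definition steiner_system (t k m : nat) (B : {set {set 'I_m}}) : Prop :=
  (forall b, b \in B -> #|b| = k) /\
  (forall T : {set 'I_m}, #|T| = t -> exists! b, b \in B /\ T \subset b).

Definition incidence_matrix (m : nat) (B : {set {set 'I_m}}) : 'M[bool]_(m, #|B|) :=
  \matrix_(i < m, j < #|B|) (i \in (enum_val j : {set 'I_m})).

Definition ceil_div (a b : nat) : nat := ((a + b.-1) %/ b)%N.

(* Main.v *)
Require Import Defs.
From HB Require Import structures.
From mathcomp Require Import all_boot all_order all_algebra.
From mathcomp Require Import reals zify ring lra.
Import Order.TTheory GRing.Theory Num.Theory.

Lemma card_bigcup_leq (T I : finType) (P : pred I) (A : I -> {set T}) (c : nat) :
  (forall i, P i -> #|A i| <= c) ->
  #|\bigcup_(i | P i) A i| <= \sum_(i | P i) c.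
Proof.
move=> hA.
apply: (big_ind2 (fun (x : {set T}) y => #|x| <= y)).
- by rewrite cards0.
- move=> x1 x2 y1 y2 h1 h2; apply: leq_trans (leq_card_setU _ _) _.
  exact: leq_add.
- exact: hA.
Qed.

Lemma decod_gen (m n u k : nat) (M : 'M[bool]_(m,n)) :
  (0 < u)%N ->
  (forall j, k <= #|[set i | M i j]|) ->
  (forall j j', j != j' -> #|[set i | M i j && M i j']| <= u) ->
  decodable (ceil_div k u) M.
Proof.
move=> u0 hk hint S [SN0 hS].
have [j jS] : exists j, j \in S by apply/set0Pn.
have sub : [set i | M i j] \subset \bigcup_(j' in S :\ j) [set i | M i j && M i j'].
  apply/subsetP => i; rewrite inE => Mij.
  have h := hS i.
  have jin : j \in [set j0 in S | M i j0] by rewrite inE jS Mij.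
  have := cardsD1 j [set j0 in S | M i j0]; rewrite jin => hc.
  have : [set j0 in S | M i j0] :\ j != set0.
    by rewrite -card_gt0; move: h; rewrite hc; case: #|_|.
  case/set0Pn => j' ; rewrite !inE => /and3P [j'j j'S Mij'].
  apply/bigcupP; exists j'; first by rewrite !inE j'j j'S.
  by rewrite inE Mij Mij'.
have le : k <= #|S :\ j| * u.
  apply: leq_trans (hk j) _; apply: leq_trans (subset_leq_card sub) _.
  rewrite -sum_nat_const; apply: card_bigcup_leq => j'; rewrite !inE => /andP [h _].
  by apply: hint; rewrite eq_sym.
have cS := cardsD1 j S; rewrite jS /= in cS.
rewrite /ceil_div cS ltn_divLR //.
move: le; clear hint; case: u u0 => // u' _; rewrite /=; lia.
Qed.

Lemma exists_subset_card (T : finType) (A : {set T}) (n : nat) :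
  n <= #|A| -> exists B : {set T}, B \subset A /\ #|B| = n.
Proof.
elim: n => [|n IH] hn; first by exists set0; rewrite sub0set cards0.
have [B [BA cB]] := IH (ltnW hn).
have : A :\: B != set0.
  rewrite -card_gt0 cardsD (setIidPr BA) cB; lia.
case/set0Pn => x; rewrite inE => /andP [xB xA].
exists (x |: B); split; first by rewrite subUset sub1set xA BA.
by rewrite cardsU1 xB cB.
Qed.

Lemma part1 (t k m : nat) (B : {set {set 'I_m}}) :
  (2 <= t)%N -> steiner_system t k B ->
  decodable (ceil_div k t.-1) (incidence_matrix B).
Proof.
move=> t2 [hk hu].
have col : forall j, [set i | incidence_matrix B i j] = enum_val j.
  by move=> j; apply/setP => i; rewrite inE mxE.
apply: decod_gen; first by case: (t) t2 => [|[]].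
- by move=> j; rewrite col hk // enum_valP.
- move=> j j' jj'; rewrite leqNgt; apply/negP => hlt.
  have ht : t <= #|[set i | incidence_matrix B i j && incidence_matrix B i j']|.
    by move: hlt; case: (t) t2 => [|[]].
  have [T [TS cT]] := exists_subset_card _ _ _ ht.
  have [b [[bB Tb] ub]] := hu T cT.
  have e1 : enum_val j = b.
    apply/esym/ub; split; first exact: enum_valP.
    apply: subset_trans TS _; apply/subsetP => i; rewrite !inE !mxE.
    by case/andP.
  have e2 : enum_val j' = b.
    apply/esym/ub; split; first exact: enum_valP.
    apply: subset_trans TS _; apply/subsetP => i; rewrite !inE !mxE.
    by case/andP.
  move/eqP: jj'; apply; apply: enum_val_inj; by rewrite e1 e2.
Qed.

Lemma real_part (R : realType) (n : nat) : (1 <= n)%N ->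
  let c := Num.ceil ((1 + Num.sqrt (1 + 24 * (n%:R : R))) / 2) in
  (3 <= c)%R /\ (((6*n)%N)%:Z <= c * (c - 1))%R.
Proof.
move=> n1 c.
set s := Num.sqrt (1 + 24 * (n%:R : R)).
have s0 : (0 <= s)%R by rewrite sqrtr_ge0.
have s2 : (s ^+ 2 = 1 + 24 * (n%:R : R))%R.
  rewrite sqr_sqrtr // addr_ge0 // mulr_ge0 //.
have n1' : (1 <= (n%:R : R))%R by rewrite ler1n.
have hc : ((1 + s) / 2 <= (c%:~R : R))%R by apply: ceil_ge.
have s5 : (5 <= s)%R by nra.
have c3 : (3 <= (c%:~R : R))%R by lra.
split; first by rewrite -(ler_int R).
rewrite -(ler_int R) intrM intrB /=.
rewrite (_ : (6 * n)%N%:~R = 6 * (n%:R : R))%R; last by rewrite -pmulrn natrM.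
rewrite (_ : 1%:~R = 1 :> R)%R //.
nra.
Qed.

Module TriM.
Section Tri.
Local Open Scope ring_scope.
Variable w : nat.
Notation V := 'I_(w.+2).

Definition zt (p : V * V) : V := - (p.1 + p.2).
Definition Pset : {set V * V} :=
  [set p | [&& p.1 != p.2, zt p != p.1 & zt p != p.2]].
Definition tri (p : V * V) : {set V} := [set p.1; p.2; zt p].
Definition Tr : {set {set V}} := tri @: Pset.

Lemma tri_eq (x y a b : V) : a \in tri (x, y) -> b \in tri (x, y) -> a != b ->
  tri (x, y) = [set a; b; -(a + b)].
Proof.
rewrite /tri /zt /= !inE.
have e1 : - (x + - (x + y)) = y by ring.
have e2 : - (- (x + y) + x) = y by ring.
have e3 : - (y + - (x + y)) = x by ring.
have e4 : - (- (x + y) + y) = x by ring.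
have e5 : - (y + x) = - (x + y) by rewrite addrC.
move=> ha hb; case/orP: ha => [/orP [] /eqP ->|/eqP ->];
  case/orP: hb => [/orP [] /eqP ->|/eqP ->]; rewrite ?eqxx //;
  rewrite ?e1 ?e2 ?e3 ?e4 ?e5 => _; apply/setP => i; rewrite !inE;
  by case: (i == x); case: (i == y); case: (i == - (x + y)).
Qed.

Lemma tri_card p : p \in Pset -> #|tri p| = 3%N.
Proof.
rewrite inE => /and3P [h12 hz1 hz2].
rewrite /tri setUC !cardsU1 cards1 !inE (negbTE h12) (negbTE hz1) (negbTE hz2).
by [].
Qed.

Lemma Tr_card T : T \in Tr -> #|T| = 3%N.
Proof. by case/imsetP => p pP ->; apply: tri_card. Qed.

Lemma Tr_lin T1 T2 : T1 \in Tr -> T2 \in Tr -> T1 != T2 -> (#|T1 :&: T2| <= 1)%N.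
Proof.
case/imsetP => [[x1 y1] _ ->]; case/imsetP => [[x2 y2] _ ->] ne.
rewrite leqNgt; apply/negP => /card_gt1P [a [b [ha hb ab]]].
move: ha hb; rewrite !in_setI => /andP [ha1 ha2] /andP [hb1 hb2].
by move/eqP: ne; apply; rewrite (tri_eq _ _ _ _ ha1 hb1 ab) (tri_eq _ _ _ _ ha2 hb2 ab).
Qed.

Lemma fiber_le T : T \in Tr -> (#|[set p in Pset | tri p == T]| <= 6)%N.
Proof.
case/imsetP => [[x y] _ ->].
pose s := [:: (x, y); (y, x); (x, zt (x,y)); (zt (x,y), x); (y, zt (x,y)); (zt (x,y), y)].
apply: (@leq_trans #|s|); last exact: card_size.
apply: subset_leq_card; apply/subsetP => [[a b]]; rewrite !inE => /andP [/and3P [ab _ _] /eqP e].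
have ha : a \in tri (x, y) by rewrite -e /tri !inE eqxx.
have hb : b \in tri (x, y) by rewrite -e /tri !inE eqxx orbT.
move: ha hb ab; rewrite /tri !inE /=.
move=> ha hb; case/orP: ha => [/orP [] /eqP ->|/eqP ->];
  case/orP: hb => [/orP [] /eqP ->|/eqP ->]; rewrite ?eqxx //= => _;
  by rewrite ?eqxx ?orbT.
Qed.

Lemma Pset_le : (#|Pset| <= #|Tr| * 6)%N.
Proof.
rewrite -sum1_card (partition_big tri (fun T => T \in Tr)); last first.
  by move=> p pP; apply: imset_f.
rewrite -sum_nat_const; apply: leq_sum => T TT.
rewrite sum1_card.
apply: (leq_trans _ (fiber_le _ TT)).
by apply: subset_leq_card; apply/subsetP => p h; rewrite inE; exact: h.
Qed.

Lemma Pset_ge : (w.+1 * w <= #|Pset|)%N.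
Proof.
pose D := [set (x, x) | x : V].
pose E := [set (x, -(x + x)) | x : V].
pose F := [set (-(y + y), y) | y : V].
have sub : ~: Pset \subset D :|: (E :\ (0, 0)) :|: (F :\ (0, 0)).
  apply/subsetP => [[x y]]; rewrite !inE /zt /= => hp.
  case: (eqVneq x y) => [<-|xy].
    by rewrite (imset_f (fun x : V => (x, x))).
  have n00 : (x, y) != (0, 0).
    by apply: contra_neq xy => -[-> ->].
  rewrite n00 /=.
  move: hp; rewrite xy /= negb_and !negbK => /orP [] /eqP h.
  - apply/orP; left; apply/orP; right; apply/imsetP; exists x => //.
    have e : y = -(x + x) - (-(x + y) - x) by ring.
    by rewrite h subrr subr0 in e; rewrite -e.
  - apply/orP; right; apply/imsetP; exists y => //.
    have e : x = -(y + y) - (-(x + y) - y) by ring.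
    by rewrite h subrr subr0 in e; rewrite -e.
have cV : #|V| = w.+2 by rewrite card_ord.
have cD : #|D| = w.+2 by rewrite card_imset ?cV // => a b [].
have cE : #|E :\ (0, 0)| = w.+1.
  have h0 : (0, 0) \in E by apply/imsetP; exists 0 => //; rewrite addr0 oppr0.
  have := cardsD1 (0, 0) E; rewrite h0 card_imset ?cV; last by move=> a b [].
  by move=> [].
have cF : #|F :\ (0, 0)| = w.+1.
  have h0 : (0, 0) \in F by apply/imsetP; exists 0 => //; rewrite addr0 oppr0.
  have := cardsD1 (0, 0) F; rewrite h0 card_imset ?cV; last by move=> a b [].
  by move=> [].
have hC := subset_leq_card sub.
have hU1 := (leq_card_setU (D :|: (E :\ (0, 0))) (F :\ (0, 0))).1.
have hU2 := (leq_card_setU D (E :\ (0, 0))).1.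
have := cardsC Pset; rewrite card_prod cV => hc.
rewrite cD cE in hU2; rewrite cF in hU1.
have hfin : (#|~: Pset| <= w.+2 + w.+1 + w.+1)%N.
  apply: leq_trans hC _; apply: leq_trans hU1 _; exact: leq_add hU2 (leqnn _).
clear -hfin hc; nia.
Qed.
End Tri.
End TriM.
Import TriM.

Theorem corollary4p5 (R : realType) :
  (forall (t k m : nat) (B : {set {set 'I_m}}),
      (2 <= t)%N -> steiner_system t k B ->
      decodable (ceil_div k t.-1) (incidence_matrix B)) /\
  (forall n : nat, (1 <= n)%N ->
      exists m : nat,
        ((m%:Z <= Num.ceil ((1 + Num.sqrt (1 + 24 * (n%:R : R))) / 2) + 3)%R)
        /\ exists M : 'M[bool]_(m, n), dk_decodable 3 3 M).
Proof.
split; first exact: part1.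
move=> n n1.
have := real_part R _ n1 => /=.
case: (Num.ceil _) => [N|N] [c3 hcc]; last by [].
have N3 : (3 <= N)%N by rewrite -lez_nat.
move: hcc; rewrite (subzn (n := 1%N)) ?(leq_trans _ N3) // -PoszM lez_nat => hcc.
exists (N.-1).+2; split.
  rewrite -PoszD lez_nat; lia.
pose s := enum (Tr (N.-1)).
have hTr := Pset_le (N.-1).
have hP := Pset_ge (N.-1).
have nTr : (n <= size s)%N by rewrite /s -cardE; nia.
pose col (j : 'I_n) := nth set0 s j.
have colT : forall j, col j \in Tr (N.-1).
  by move=> j; rewrite -mem_enum; apply: mem_nth; apply: leq_trans (ltn_ord j) nTr.
pose M : 'M[bool]_((N.-1).+2, n) := (\matrix_(i < (N.-1).+2, j < n) (i \in col j))%R.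
have colE : forall j, [set i | M i j] = col j.
  by move=> j; apply/setP => i; rewrite inE mxE.
exists M; split; last first.
  by move=> j; rewrite colE Tr_card.
apply: (@decod_gen _ _ 1 3); first by [].
- by move=> j; rewrite colE Tr_card.
- move=> j j' jj'.
  have -> : [set i | M i j &&
                 M i j'] = col j :&: col j'.
    by apply/setP => i; rewrite !inE !mxE.
  apply: Tr_lin; rewrite ?colT //.
  rewrite /col nth_uniq ?enum_uniq //; try exact: leq_trans (ltn_ord _) nTr.
Qed.
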